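(* Let $t\ge 2$, let $n_1,\dots,n_t$ be positive integers, and let $G=K_{n_1,\dots,n_t}$ be the complete $t$-partite graph with partite sets $V_1,\dots,V_t$, $|V_i|=n_i$. Let $N_t=\{1,\dots,t\}$ and $f(I)=\sum_{i\in I}n_i$ for $I\subseteq N_t$. Let $p$ be a positive integer with $f(N_t)>p$. Then for every optimal $\gamma_p(G)$-set $D$ and every $i\in N_t\setminus I_D$, $$\left\lceil\frac{p-f(I_D)}{t-|I_D|-1}\right\rceil\le n_i.$$
   Context: A set $S\subseteq V(G)$ is a $p$-dominating set of $G$ if every vertex $v\in V(G)\setminus S$ has at least $p$ neighbors in $S$. The $p$-domination number $\gamma_p(G)$ is the minimum cardinality of a $p$-dominating set of $G$, and a $\gamma_p(G)$-set is a $p$-dominating set of cardinality $\gamma_p(G)$. For $D\subseteq V(G)$ write $D_i=V_i\cap D$ for $i\in N_t$ and $I_D=\{i\in N_t: |D_i|=|V_i|\}$. For a $\gamma_p(G)$-set $D$ with $|I_D|<t$ define $$\mu(D)=\sum_{i\in N_t\setminus I_D}\left|\,|D_i|-\frac{|D|-f(I_D)}{t-|I_D|}\right|.$$ A $\gamma_p(G)$-set $D$ is optimal if: (1) $f(I_D)<p$; (2) $|I_D|\ge |I_S|$ for every $\gamma_p(G)$-set $S$; (3) $\mu(D)\le\mu(S)$ for every $\gamma_p(G)$-set $S$ with $I_S=I_D$. *)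

(* Defs.v *)
From mathcomp Require Import all_boot all_order all_algebra.
Set Implicit Arguments. Unset Strict Implicit. Unset Printing Implicit Defensive.
Import Order.TTheory GRing.Theory Num.Theory.

(* Complete t-partite graph K_{n_0,...,n_{t-1}}: vertices are pairs (i, j) with
   i : 'I_t the part index and j : 'I_(n i); V_i = vertices with tag i. *)
Section Multipartite.
Variables (t : nat) (n : 'I_t -> nat).

Definition vert := {i : 'I_t & 'I_(n i)}.

Definition adj (x y : vert) : bool := tag x != tag y.

Definition part (i : 'I_t) : {set vert} := [set x : vert | tag x == i].

Definition p_dominating (p : nat) (S : {set vert}) : Prop :=
  forall v : vert, v \notin S -> p <= #|[set u in S | adj u v]|.

Definition gamma_p_set (p : nat) (D : {set vert}) : Prop :=
  p_dominating p D /\ (forall S, p_dominating p S -> #|D| <= #|S|).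

Definition Dpart (D : {set vert}) (i : 'I_t) : {set vert} := D :&: part i.

Definition fI (I : {set 'I_t}) : nat := \sum_(i in I) n i.

Definition ID (D : {set vert}) : {set 'I_t} :=
  [set i | #|Dpart D i| == #|part i|].

Definition mu (D : {set vert}) : rat :=
  \sum_(i in ~: ID D)
    `| (#|Dpart D i|)%:R -
       (((#|D|)%:R - (fI (ID D))%:R) / (t - #|ID D|)%:R) |%R.

Definition optimal (p : nat) (D : {set vert}) : Prop :=
  [/\ gamma_p_set p D, #|ID D| < t, fI (ID D) < p,
      (forall S, gamma_p_set p S -> #|ID S| <= #|ID D|) &
      (forall S, gamma_p_set p S -> ID S = ID D -> (mu D <= mu S)%R)].

End Multipartite.

(* Main.v *)
Require Import Defs.
From mathcomp Require Import all_boot all_order all_algebra.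
Import Order.TTheory GRing.Theory Num.Theory.
Set Implicit Arguments. Unset Strict Implicit.

Section H.
Variables (t : nat) (n : 'I_t -> nat).

Lemma card_part j : #|part n j| = n j.
Proof.
have -> : part n j = [set (Tagged (fun i => 'I_(n i)) k : vert n) | k : 'I_(n j)].
  apply/setP => -[i k]; rewrite inE /=; apply/idP/imsetP.
    by move/eqP => ei; subst j; exists k.
  by case=> k' _ e; move: (congr1 (@tag _ _) e) => /= ->.

rewrite card_imset ?card_ord // => x y /eqP.
by rewrite eq_Tagged /= => /eqP.
Qed.

Lemma nb_card (S : {set vert n}) v :
  #|[set u in S | adj u v]| = #|S| - #|@Dpart t n S (tag v)|.
Proof.
rewrite -cardsD; apply: eq_card => u; rewrite !inE /adj.
by rewrite andbC.
Qed.

Lemma dom_nonfull S p l : p_dominating p S -> l \notin @ID t n S ->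
  p <= #|S| - #|@Dpart t n S l|.
Proof.
move=> hS hl.
have: ~~ (part n l \subset S).
  apply: contra hl => sub; rewrite inE /Dpart (setIidPr sub) //.
case/subsetPn => v vin vnot.
have := hS v vnot; rewrite nb_card.
by move: vin; rewrite inE => /eqP ->.
Qed.

Lemma bound_I (S : {set vert n}) (I : {set 'I_t}) :
  #|[set x in S | tag x \in I]| <= fI n I.
Proof.
rewrite -sum1_card (partition_big (fun x : vert n => tag x) (mem I)); last first.
  by move=> x; rewrite inE => /andP[].
rewrite /fI; apply: leq_sum => j jI.
rewrite sum1_card -(card_part j); apply: subset_leq_card.
apply/subsetP => x; rewrite unfold_in /= => /andP[_]; by rewrite inE.
Qed.


Lemma full_eq (D : {set vert n}) j : j \in @ID t n D -> @Dpart t n D j = part n j.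
Proof.
rewrite inE => /eqP hc; apply/eqP; rewrite eqEcard subsetIr hc leqnn //.
Qed.

End H.

From mathcomp Require Import zify.

Theorem lemma7 (t : nat) (n : 'I_t -> nat) (p : nat)
  (ht : 2 <= t) (hn : forall i, 0 < n i) (hp : 0 < p)
  (hf : p < fI n [set: 'I_t]) (D : {set vert n}) (hD : optimal p D) :
  forall i : 'I_t, i \notin ID D ->
    (Num.ceil (((p%:Z - (fI n (ID D))%:Z)%:~R : rat)
               / ((t - #|ID D| - 1)%:R : rat)) <= (n i)%:Z)%R.
Proof.
case: hD => [[hdom hmin] hIt hfI hmax _] i hi.
have key : p - fI n (ID D) <= n i.
  rewrite leqNgt; apply/negP => hlt.
  set R := [set x in D | (tag x \notin ID D) && (tag x != i)].
  set m := n i - #|Dpart D i|.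
  have hDi : p <= #|D| - #|Dpart D i| := dom_nonfull hdom hi.
  have hDR : #|D| <= #|R| + fI n (ID D) + #|Dpart D i|.
    apply: (leq_trans (n := #|R :|: [set x in D | tag x \in ID D] :|: Dpart D i|)).
      apply: subset_leq_card; apply/subsetP => x xD.
      rewrite !inE xD /=.
      by case: eqP; case: eqP.
    apply: (leq_trans (leq_card_setU _ _)); rewrite leq_add2r.
    apply: (leq_trans (leq_card_setU _ _)); rewrite leq_add2l.
    exact: bound_I.
  have hDiD : #|Dpart D i| <= #|D| by apply: subset_leq_card; apply: subsetIl.
  have hpi : #|Dpart D i| <= n i.
    by rewrite -(card_part n i); apply: subset_leq_card; apply: subsetIr.
  have hR : m <= #|R| by rewrite /m; lia.
  set A := [set x in take m (enum R)].
  have hA : #|A| = m.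
    rewrite cardsE; move/card_uniqP: (take_uniq m (enum_uniq (mem R))) => ->.
    by rewrite size_take -cardE; case: ltnP => // h; apply/eqP; rewrite eqn_leq h hR.
  have AR : A \subset R.
    by apply/subsetP => x; rewrite inE => /mem_take; rewrite mem_enum.
  have RD : R \subset D by apply/subsetP => x; rewrite inE => /andP[].
  have AD : A \subset D := subset_trans AR RD.
  set S := (D :\: A) :|: (part n i :\: D).
  have hS : #|S| = #|D|.
    rewrite cardsU.
    have -> : (D :\: A) :&: (part n i :\: D) = set0.
      by apply/setP => x; rewrite !inE; case: (x \in D); rewrite ?andbF.
    rewrite cards0 subn0 cardsDS // cardsD setIC -/(Dpart D i) card_part hA.
    by move: (leq_trans hR (subset_leq_card RD)) => /subnK.
  have notA : forall x, x \in A -> tag x \notin ID D /\ tag x != i.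
    by move=> x /(subsetP AR); rewrite inE => /andP[_ /andP[]].
  have {}notA : forall x, x \in take m (enum R) -> tag x \notin ID D /\ tag x != i.
    by move=> x xt; apply: notA; rewrite inE.
  have piS : part n i \subset S.
    apply/subsetP => x xi; move: (xi); rewrite inE => /eqP xi'.
    rewrite !inE xi' eqxx ?andbT.
    case xD: (x \in D); rewrite /= ?orbF ?orbT ?andbT //.
    apply/negP => xA; case: (notA x xA) => _; by rewrite xi' eqxx.
  have pjS : forall j, j \in ID D -> part n j \subset S.
    move=> j hj; apply/subsetP => x xj; rewrite !inE.
    have xD : x \in D.
      by move: xj; rewrite -(full_eq hj) inE => /andP[].
    rewrite xD /= andbT; apply/orP; left; apply/negP => xA; case: (notA x xA).
    by move: xj; rewrite inE => /eqP ->; rewrite hj.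
  have hdomS : p_dominating p S.
    move=> v vS; rewrite nb_card hS.
    have li : tag v != i.
      apply: contra vS => /eqP e; apply: (subsetP piS); by rewrite inE e.
    have sub : Dpart S (tag v) \subset Dpart D (tag v).
      apply/subsetP => x; rewrite !inE => /andP[/orP[/andP[_ ->] //|/andP[]]].
      by move=> _ /eqP -> /eqP e; move: li; rewrite -e eqxx.
    case hl: (tag v \in ID D).
      exfalso; move: vS; rewrite !inE.
      have vD : v \in D.
        have : v \in part n (tag v) by rewrite inE.
        by rewrite -(full_eq hl) inE => /andP[].
      rewrite vD /= orbF andbT negbK => vA; case: (notA v vA).
      by rewrite hl.
    have := dom_nonfull hdom (negbT hl).
    have := subset_leq_card sub; lia.
  have gS : gamma_p_set p S.
    by split => // S' hS'; rewrite hS; apply: hmin.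
  have := hmax S gS.
  have sub : i |: ID D \subset ID S.
    apply/subsetP => j; rewrite in_setU1 => /orP[/eqP ->|hj]; rewrite inE.
      by rewrite /Dpart (setIidPr piS).
    by rewrite /Dpart (setIidPr (pjS j hj)).
  have := subset_leq_card sub; rewrite cardsU1 hi add1n => h1 h2.
  by have := leq_trans h1 h2; rewrite ltnn.
rewrite Num.Theory.ceil_le_int.
have -> : ((p%:Z - (fI n (ID D))%:Z)%:~R : rat) = (((p - fI n (ID D))%N)%:R)%R.
  by rewrite subzn // ltnW.
rewrite pmulrn.
case hk: (t - #|ID D| - 1) => [|k].
  by rewrite invr0 mulr0 ler0n.
rewrite ler_pdivrMr ?ltr0n // -natrM ler_nat.
apply: (leq_trans key); rewrite leq_pmulr //.
Qed.
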